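(* Let $(\mathcal{P},d)$ be a 1-2-metric and $\alpha>0$. Every strategy profile that is a Greedy Equilibrium of the greedy-routing network creation game on $(\mathcal{P},d)$ with edge price $\alpha$ yields a network $G(\mathbf{s})$ that is a Domination Set Graph.
   Context: A 1-2-metric is a finite metric space $(\mathcal{P},d)$ with $d(u,v)\in\{1,2\}$ for all distinct $u,v$; arcs of length 1 (resp. 2) are called 1-edges (resp. 2-edges). Game: the agents are the points of $\mathcal{P}$. A strategy of agent $u$ is $S_u\subseteq\mathcal{P}\setminus\{u\}$; a profile $\mathbf{s}=(S_u)_u$ defines the directed network $G(\mathbf{s})$ on $\mathcal{P}$ with arcs $(u,v)$, $v\in S_u$, of length $d(u,v)$. A greedy path from $u$ to $v$ is a directed path $u=x_1,\dots,x_j=v$ of arcs with $d(x_i,v)>d(x_{i+1},v)$ for all $i$. $\mathrm{stretch}(u,v)$ is the minimum length of a greedy path from $u$ to $v$ divided by $d(u,v)$, or a fixed sufficiently large penalty constant $Z$ if no greedy path exists. The cost of $u$ is $c_u(\mathbf{s})=\sum_{v\ne u}\mathrm{stretch}_{G(\mathbf{s})}(u,v)+\alpha|S_u|$. A profile is a Greedy Equilibrium (GE) if no agent $u$ can strictly decrease $c_u$ by changing $S_u$ through adding one element, deleting one element, or replacing one element by another one (swap), with all other strategies fixed. Notation for a directed network $G$ on $\mathcal{P}$ and node $u$: $N(u)$ is the set of out-neighbours of $u$; $W_1(u)=\{v\in N(u):d(u,v)=1\}$; $W_2(u)=\{v\in N(u):d(u,v)=2\}$; $W_{1\to1}(u)$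 is the set of nodes $w\ne u$ such that there is $v$ with $d(u,v)=d(v,w)=1$ and $(u,v),(v,w)$ arcs of $G$; $W_2^+(u)=W_2(u)\cap W_{1\to1}(u)$. $G^1_{-u}$ is the directed graph on $\mathcal{P}\setminus\{u\}$ having arc $(v,w)$ for every pair with $d(v,w)=1$. A set $D$ of vertices of a directed graph $H$ is dominating if every vertex of $H$ not in $D$ has an in-neighbour in $D$. A Domination Set Graph (DSG) is a directed network $G$ on $\mathcal{P}$ such that (i) $G$ contains every arc $(v,w)$ with $d(v,w)=1$; (ii) for every node $u$, $N(u)$ is dominating in $G^1_{-u}$; (iii) for every node $u$ there is no set $N'\subseteq\mathcal{P}\setminus\{u\}$, obtained from $N(u)$ by deleting one element or by replacing one element by another, such that $N'$ contains all $v$ with $d(u,v)=1$, $N'$ is dominating in $G^1_{-u}$, and $|\{v\in N': d(u,v)=2\}\cap W_{1\to1}(u)|<|W_2^+(u)|$. *)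

(* Defs.v *)
From HB Require Import structures.
From mathcomp Require Import all_boot all_order all_algebra.
Set Implicit Arguments. Unset Strict Implicit. Unset Printing Implicit Defensive.
Import Order.TTheory GRing.Theory Num.Theory.
Local Open Scope ring_scope.

Section Game.
Variable P : finType.
Variable d : P -> P -> nat.

(* 1-2-metric: d u u = 0, symmetric, values in {1,2} on distinct points
   (the triangle inequality then holds automatically). *)
Definition one_two_metric : Prop :=
  (forall u, d u u = 0%N) /\ (forall u v, d u v = d v u) /\
  (forall u v, u != v -> d u v = 1%N \/ d u v = 2%N).

(* A strategy profile: S u is the strategy of agent u; the network G(S) has
   arc (u,v) iff v \in S u. *)
Definition profile := P -> {set P}.

Definition valid_profile (S : profile) : Prop := forall u, u \notin S u.

Definition is_greedy (S : profile) (v x : P) (p : seq P) : bool :=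
  path (fun a b => (b \in S a) && (d b v < d a v)%N) x p && (last x p == v).

Definition plen (x : P) (p : seq P) : nat := sumn (pairmap d x p).

(* all sequences of points with at most #|P|-1 entries (so paths with at most
   #|P| nodes); every greedy path has pairwise distinct nodes (distances to
   the target strictly decrease), so every greedy path is among them. *)
Definition cands : seq (seq P) :=
  flatten (map (fun k => map (@tval k P) (enum {: k.-tuple P})) (iota 0 #|P|)).

Definition greedy_lens (S : profile) (u v : P) : seq nat :=
  [seq plen u p | p <- cands & is_greedy S v u p].

Variable R : realFieldType.

Definition stretch (Z : R) (S : profile) (u v : P) : R :=
  match greedy_lens S u v with
  | [::] => Z
  | l :: ls => (foldr minn l ls)%:R / (d u v)%:R
  end.

Definition cost (Z alpha : R) (S : profile) (u : P) : R :=
  \sum_(v | v != u) stretch Z S u v + alpha * #|S u|%:R.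

Definition upd (S : profile) (u : P) (T : {set P}) : profile :=
  fun x => if x == u then T else S x.

Definition one_move (u : P) (A B : {set P}) : Prop :=
  u \notin B /\
  ((exists v, B = v |: A) \/ (exists v, v \in A /\ B = A :\ v) \/
   (exists v w, v \in A /\ w \notin A /\ B = w |: (A :\ v))).

Definition greedy_equilibrium (Z alpha : R) (S : profile) : Prop :=
  valid_profile S /\
  forall u T, one_move u (S u) T -> ~ (cost Z alpha (upd S u T) u < cost Z alpha S u).

Definition dominating (u : P) (D : {set P}) : Prop :=
  forall w, w != u -> w \notin D ->
    exists x, [/\ x \in D, x != u & d x w = 1%N].

Definition W11 (S : profile) (u : P) : {set P} :=
  [set w | (w != u) &&
     [exists v, [&& d u v == 1%N, v \in S u, d v w == 1%N & w \in S v]]].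

Definition W2 (S : profile) (u : P) : {set P} := [set v in S u | d u v == 2%N].

Definition W2plus (S : profile) (u : P) : {set P} := W2 S u :&: W11 S u.

Definition del_or_swap (u : P) (A B : {set P}) : Prop :=
  u \notin B /\
  ((exists v, v \in A /\ B = A :\ v) \/
   (exists v w, v \in A /\ w \notin A /\ B = w |: (A :\ v))).

Definition DSG (S : profile) : Prop :=
  (forall v w, d v w = 1%N -> w \in S v) /\
  (forall u, dominating u (S u)) /\
  (forall u N', del_or_swap u (S u) N' ->
     ~ [/\ (forall v, d u v = 1%N -> v \in N'),
           dominating u N' &
           (#|[set v in N' | d u v == 2%N] :&: W11 S u| < #|W2plus S u|)%N]).

End Game.

(* Main.v *)
Require Import Defs.
From HB Require Import structures.
From mathcomp Require Import all_boot all_order all_algebra zify ring lra.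
Import Order.TTheory GRing.Theory Num.Theory.
Local Open Scope ring_scope.
Lemma in_cands {P : finType} (p : seq P) : (size p < #|P|)%N -> p \in cands P.
Proof.
move=> sp; apply/flatten_mapP; exists (size p); first by rewrite mem_iota.
by apply/mapP; exists (in_tuple p); rewrite ?mem_enum.
Qed.

Lemma foldr_minn_le (l : nat) ls x : x \in l :: ls -> (foldr minn l ls <= x)%N.
Proof.
elim: ls => [|y ls IH] /=; first by rewrite inE => /eqP ->.
rewrite !inE => /or3P[xl|/eqP->|xs].
- by apply: leq_trans (geq_minr _ _) (IH _); rewrite inE xl.
- exact: geq_minl.
- by apply: leq_trans (geq_minr _ _) (IH _); rewrite inE xs orbT.
Qed.

Lemma foldr_minn_mem (l : nat) ls : foldr minn l ls \in l :: ls.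
Proof.
elim: ls => [|y ls IH] /=; first by rewrite inE.
rewrite /minn; case: ifP => _; first by rewrite !inE eqxx orbT.
by move: IH; rewrite !inE => /orP[->|->]; rewrite ?orbT.
Qed.

Lemma mem_gl {P : finType} {d : P -> P -> nat} {S : profile P} {u v p} :
  p \in cands P -> is_greedy d S v u p -> plen d u p \in greedy_lens d S u v.
Proof. by move=> pc g; apply: map_f; rewrite mem_filter g pc. Qed.

Lemma stretch_le {P : finType} {d : P -> P -> nat} {R : realFieldType} {Z : R} {S : profile P} {u v p} :
  p \in cands P -> is_greedy d S v u p ->
  stretch d Z S u v <= (plen d u p)%:R / (d u v)%:R.
Proof.
move=> pc g; have := mem_gl pc g; rewrite /stretch.
case: (greedy_lens d S u v) => [//|l ls] m.
by apply: ler_wpM2r; [rewrite invr_ge0 ler0n | rewrite ler_nat; apply: foldr_minn_le].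
Qed.

Lemma stretch_cases {P : finType} {d : P -> P -> nat} {R : realFieldType} {Z : R} {S : profile P} {u v} :
  (stretch d Z S u v = Z /\ forall p, p \in cands P -> ~~ is_greedy d S v u p) \/
  exists p, [/\ p \in cands P, is_greedy d S v u p &
                stretch d Z S u v = (plen d u p)%:R / (d u v)%:R].
Proof.
rewrite /stretch; case E: (greedy_lens d S u v) => [|l ls].
  left; split=> // p pc; apply/negP=> g; have := mem_gl pc g; by rewrite E.
right; have := foldr_minn_mem l ls; rewrite -E => /mapP [p].
by rewrite mem_filter => /andP[g pc] ->; exists p.
Qed.
Lemma d_pos {P : finType} {d : P -> P -> nat} {u v} :
  one_two_metric d -> u != v -> (0 < d u v <= 2)%N.
Proof. by move=> [_ [_ H]] /H [] ->. Qed.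

Lemma d_eq0 {P : finType} {d : P -> P -> nat} {u v} :
  one_two_metric d -> d u v = 0%N -> u = v.
Proof.
move=> H e; apply/eqP; apply: contraT => uv.
by have := d_pos H uv; rewrite e.
Qed.

Lemma greedy_char {P : finType} {d : P -> P -> nat} {S : profile P} {u v p} :
  one_two_metric d -> u != v -> is_greedy d S v u p ->
  (p = [:: v] /\ v \in S u) \/
  (exists x, [/\ p = [:: x; v], x \in S u, d x v = 1%N, v \in S x & d u v = 2%N]).
Proof.
move=> H uv; rewrite /is_greedy.
case: p => [|y [|z r]] /=.
- by move=> /eqP E; rewrite E eqxx in uv.
- by rewrite andbT => /andP[/andP[yS _] /eqP yv]; subst; left.
move=> /andP[/andP[/andP[yS ylt] /andP[/andP[zS zlt] pr]] lst].
have := d_pos H uv => /andP[_ uv2].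
have dz : d z v = 0%N by move: ylt zlt uv2; lia.
have zv := d_eq0 H dz; subst z.
have dy : d y v = 1%N by move: ylt zlt uv2; lia.
have du : d u v = 2%N by move: ylt zlt uv2; lia.
case: r pr lst => [|w r] /=.
  by move=> _ _; right; exists y; split.
by rewrite dz => /andP[/andP[_]].
Qed.

Lemma greedy_mono {P : finType} {d : P -> P -> nat} {S S' : profile P} {v x p} :
  (forall a, S a \subset S' a) -> is_greedy d S v x p -> is_greedy d S' v x p.
Proof.
rewrite /is_greedy => sub /andP[pp ->]; rewrite andbT; apply: sub_path pp => a b /andP[bS ->].
by rewrite (subsetP (sub a)).
Qed.

Lemma card_ge2 {P : finType} (u v : P) : u != v -> (1 < #|P|)%N.
Proof.
move=> uv; have : uniq [:: u; v] by rewrite /= inE uv.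
move/card_uniqP => /= e; have := max_card (mem [:: u; v]); by rewrite e.
Qed.

Lemma card_ge3 {P : finType} (u x v : P) : u != v -> x != u -> x != v -> (2 < #|P|)%N.
Proof.
move=> uv xu xv; have : uniq [:: u; x; v] by rewrite /= !inE negb_or uv xv eq_sym xu.
move/card_uniqP => /= e; have := max_card (mem [:: u; x; v]); by rewrite e.
Qed.

Lemma plen1 {P : finType} (d : P -> P -> nat) u v : plen d u [:: v] = d u v.
Proof. by rewrite /plen /= addn0. Qed.

Lemma plen2 {P : finType} (d : P -> P -> nat) u x v : plen d u [:: x; v] = (d u x + d x v)%N.
Proof. by rewrite /plen /= addn0. Qed.

Lemma stretch_single {P : finType} {d : P -> P -> nat} {R : realFieldType} {Z : R} {S : profile P} {u v} :
  one_two_metric d -> u != v -> v \in S u -> stretch d Z S u v <= 1.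
Proof.
move=> H uv vS.
have g : is_greedy d S v u [:: v].
  rewrite /is_greedy /= vS eqxx /=; have [d0 _] := H; rewrite d0.
  by rewrite !andbT; have /andP[] := d_pos H uv.
have pc : [:: v] \in cands P by apply: in_cands; exact: card_ge2 uv.
apply: le_trans (stretch_le pc g) _; rewrite plen1 divff //.
by have /andP[h _] := d_pos H uv; rewrite pnatr_eq0 -lt0n h.
Qed.

Lemma stretch_two {P : finType} {d : P -> P -> nat} {R : realFieldType} {Z : R} {S : profile P} {u x v} :
  one_two_metric d -> u != v -> x != u -> x \in S u -> d x v = 1%N -> v \in S x ->
  d u v = 2%N ->
  stretch d Z S u v <= (d u x + 1)%:R / 2.
Proof.
move=> H uv xu xS xv vS duv.
have xv' : x != v by apply/eqP => e; move: xv; rewrite e; have [-> _] := H.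
have g : is_greedy d S v u [:: x; v].
  rewrite /is_greedy /= xS vS eqxx xv duv /=; have [d0 _] := H; by rewrite d0.
have pc : [:: x; v] \in cands P by apply: in_cands; exact: card_ge3 uv xu xv'.
by apply: le_trans (stretch_le pc g) _; rewrite plen2 xv duv.
Qed.

Lemma greedy_val {P : finType} {d : P -> P -> nat} {R : realFieldType} {S : profile P} {u v p} :
  one_two_metric d -> u \notin S u -> u != v -> is_greedy d S v u p ->
  ((plen d u p)%:R / (d u v)%:R = 1 :> R /\ (v \in S u \/ (d u v = 2%N /\ v \in W11 d S u)))
  \/ ((plen d u p)%:R / (d u v)%:R = 3%:R / 2%:R :> R).
Proof.
move=> H uS uv g; case: (greedy_char H uv g) => [[-> vS]|[x [-> xS xv vS duv]]].
  left; split; last by left.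
  rewrite plen1 divff //.
  by have /andP[h _] := d_pos H uv; rewrite pnatr_eq0 -lt0n h.
have xu : u != x by apply/eqP => e; move: uS; rewrite {1}e xS.
rewrite plen2 xv duv; have /andP[h1 h2] := d_pos H xu.
have [e|e] : d u x = 1%N \/ d u x = 2%N by lia.
  left; rewrite e divff ?pnatr_eq0 //; split => //; right; split => //.
  rewrite inE eq_sym uv /=; apply/existsP; exists x.
  by rewrite e xS xv vS eqxx.
by right; rewrite e.
Qed.

Lemma stretch_mono {P : finType} {d : P -> P -> nat} {R : realFieldType} {Z : R} {S S' : profile P} {u v} :
  one_two_metric d -> u \notin S' u -> u != v -> 3%:R / 2%:R <= Z ->
  (forall p, is_greedy d S v u p -> is_greedy d S' v u p) ->
  stretch d Z S' u v <= stretch d Z S u v.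
Proof.
move=> H uS uv Zb mono.
case: (@stretch_cases _ d R Z S u v) => [[-> _]|[p [pc g ->]]]; last first.
  exact: stretch_le pc (mono _ g).
case: (@stretch_cases _ d R Z S' u v) => [[-> _]//|[p [pc g ->]]].
case: (@greedy_val _ _ R _ _ _ _ H uS uv g) => [[-> _]|->] //.
apply: le_trans Zb; lra.
Qed.

Lemma add_gain {P : finType} {d : P -> P -> nat} {R : realFieldType} {Z alpha : R}
    {S : profile P} {u w} :
  one_two_metric d -> u \notin S u -> w \notin S u -> w != u ->
  (forall p, p \in cands P -> ~~ is_greedy d S w u p) -> 1 + alpha < Z ->
  3%:R / 2%:R <= Z ->
  cost d Z alpha (upd S u (w |: S u)) u < cost d Z alpha S u.
Proof.
move=> H uS wS wu nog Z1 Z2.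
set S' := upd S u (w |: S u).
have S'u : S' u = w |: S u by rewrite /S' /upd eqxx.
have uS' : u \notin S' u by rewrite S'u !inE negb_or eq_sym wu uS.
have sub : forall a, S a \subset S' a.
  by move=> a; rewrite /S' /upd; case: eqP => [->|_]; [exact: subsetUr | exact: subxx].
have oldw : stretch d Z S u w = Z.
  case: (@stretch_cases _ d R Z S u w) => [[]//|[p [pc g _]]].
  by move: (nog p pc); rewrite g.
have neww : stretch d Z S' u w <= 1.
  by apply: stretch_single H _ _; [rewrite eq_sym | rewrite S'u setU11].
rewrite /cost S'u cardsU1 wS (bigD1 w) //= [X in _ < X + _](bigD1 w) //= oldw.
have rest : \sum_(v | (v != u) && (v != w)) stretch d Z S' u v <=
            \sum_(v | (v != u) && (v != w)) stretch d Z S u v.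
  apply: ler_sum => v /andP[vu _]; apply: stretch_mono H uS' _ Z2 _.
    by rewrite eq_sym.
  by move=> p; apply: greedy_mono.
rewrite natrD mulrDr mulr1; lra.
Qed.
Lemma d12eq {P : finType} {d : P -> P -> nat} {u v} :
  one_two_metric d -> v != u -> (d u v != 1%N) = (d u v == 2%N).
Proof.
move=> H vu; have uv : u != v by rewrite eq_sym.
have /andP[] := d_pos H uv.
by case: (d u v) => [|[|[|n]]].
Qed.

Lemma card_split {P : finType} (d : P -> P -> nat) u (W X : {set P}) :
  one_two_metric d -> u \notin X -> [set v | d u v == 1%N] \subset X ->
  #|X| = (#|[set v | d u v == 1%N]| + #|[set v in X | d u v == 2%N] :&: W| +
          #|[set v | (v != u) && (d u v == 2%N) && (v \notin W)] :&: X|)%N.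
Proof.
move=> H uX sub.
rewrite -(cardsID [set v | d u v == 1%N] X) (setIidPr sub) -(cardsID W (X :\: _)).
rewrite addnA; congr (_ + _ + _)%N; apply: eq_card => v; rewrite !inE;
  case vX: (v \in X); rewrite ?andbF ?andbT //=;
  have vu : v != u by apply: contraNneq uX => <-.
  by rewrite (d12eq H vu).
by rewrite (d12eq H vu) vu andbC.
Qed.

Lemma sum_ind {P : finType} {R : realFieldType} (u : P) (F : {set P}) (c : R) :
  F \subset [set v | v != u] ->
  \sum_(v | v != u) (if v \in F then c else 0) = c *+ #|F|.
Proof.
move=> sub; rewrite -big_mkcondr /= -sumr_const; apply: eq_bigl => v.
case vF: (v \in F); rewrite ?andbF ?andbT //.
by have := subsetP sub v vF; rewrite inE.
Qed.

Lemma swap_gain {P : finType} {d : P -> P -> nat} {R : realFieldType} {Z alpha : R}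
    {S : profile P} {u} {T : {set P}} :
  one_two_metric d -> valid_profile S -> (forall v w, d v w = 1%N -> w \in S v) ->
  0 < alpha -> 3%:R / 2%:R <= Z ->
  del_or_swap u (S u) T -> (forall v, d u v = 1%N -> v \in T) -> dominating d u T ->
  (#|[set v in T | d u v == 2%N] :&: W11 d S u| < #|W2plus d S u|)%N ->
  cost d Z alpha (upd S u T) u < cost d Z alpha S u.
Proof.
move=> H val one apos Z2 ds T1 domT lt.
have uS := val u.
have uT : u \notin T by case: ds.
have [d0 [dsym _]] := H.
set W := W11 d S u.
have sT : [set v | d u v == 1%N] \subset T.
  by apply/subsetP => v; rewrite inE => /eqP; exact: T1.
have sS : [set v | d u v == 1%N] \subset S u.
  by apply/subsetP => v; rewrite inE => /eqP; exact: one.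
have cT := card_split d u W T H uT sT.
have cS := card_split d u W (S u) H uS sS.
set E := [set v | (v != u) && (d u v == 2%N) && (v \notin W)] in cT cS *.
have eT := cardsID T E; have eS := cardsID (S u) E.
have wp : W2plus d S u = [set v in S u | d u v == 2%N] :&: W by [].
rewrite wp in lt.
set S' := upd S u T.
have S'u : S' u = T by rewrite /S' /upd eqxx.
have S'x : forall x, x != u -> S' x = S x by move=> x xu; rewrite /S' /upd (negbTE xu).
pose g (X : {set P}) v : R := 1 + (if v \in E :\: X then 2%:R^-1 else 0).
have up : forall v, v != u -> stretch d Z S' u v <= g T v.
  move=> v vu; have uv : u != v by rewrite eq_sym.
  have g1 : 1 <= g T v by rewrite /g; case: ifP => _; lra.
  have /andP[h1 h2] := d_pos H uv.
  have [e|e] : d u v = 1%N \/ d u v = 2%N by lia.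
    apply: le_trans g1; apply: stretch_single H uv _; rewrite S'u; exact: T1.
  case vT: (v \in T).
    by apply: le_trans g1; apply: stretch_single H uv _; rewrite S'u.
  case vW: (v \in W).
    move: vW; rewrite /W inE => /andP[_ /existsP[x /and4P[/eqP ux xS /eqP xv vSx]]].
    have xu : x != u by apply/eqP => ex; move: ux; rewrite ex d0.
    apply: le_trans g1; apply: le_trans (stretch_two H uv xu _ xv _ e) _.
    - rewrite S'u; exact: T1.
    - by rewrite S'x.
    - by rewrite ux -[(1 + 1)%N]/2%N divff ?pnatr_eq0.
  have vE : v \in E :\: T by rewrite in_setD vT /E in_set vu e /= vW.
  rewrite /g vE.
  have [x [xT xu xv]] := domT v vu (negbT vT).
  have ux : u != x by rewrite eq_sym.
  have /andP[_ hx] := d_pos H ux.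
  have vSx : v \in S' x by rewrite S'x // one.
  apply: le_trans (stretch_two H uv xu _ xv vSx e) _.
  - by rewrite S'u.
  have h3 : (d u x + 1 <= 3)%N by rewrite addn1.
  apply: (@le_trans _ _ (3%:R / 2)).
    by apply: ler_wpM2r; [rewrite invr_ge0 ler0n | rewrite ler_nat].
  lra.
have lo : forall v, v != u -> g (S u) v <= stretch d Z S u v.
  move=> v vu; have uv : u != v by rewrite eq_sym.
  have g32 : g (S u) v <= 3%:R / 2 by rewrite /g; case: ifP => _; lra.
  case: (@stretch_cases _ d R Z S u v) => [[-> _]|[p [pc gp ->]]].
    exact: le_trans g32 Z2.
  case: (@greedy_val _ _ R _ _ _ _ H uS uv gp) => [[-> hv]|->]; last exact: g32.
  rewrite /g; case: ifP; last by rewrite addr0.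
  rewrite in_setD /E in_set => /andP[vS /andP[_ vW]].
  by case: hv => [vS'|[_ vW']]; [rewrite vS' in vS | rewrite vW' in vW].
have sumg : forall X : {set P}, \sum_(v | v != u) g X v =
    \sum_(v | v != u) (1 : R) + 2%:R^-1 *+ #|E :\: X|.
  move=> X; rewrite big_split /= sum_ind //; apply/subsetP => v.
  by rewrite !inE => /andP[_ /andP[/andP[-> _] _]].
have suT : \sum_(v | v != u) stretch d Z S' u v <= \sum_(v | v != u) g T v.
  by apply: ler_sum => v vu; apply: up.
have suS : \sum_(v | v != u) g (S u) v <= \sum_(v | v != u) stretch d Z S u v.
  by apply: ler_sum => v vu; apply: lo.
rewrite !sumg in suT suS.
rewrite -(mulr_natr (2%:R^-1) #|E :\: T|) in suT.
rewrite -(mulr_natr (2%:R^-1) #|E :\: S u|) in suS.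
move/(congr1 (fun n : nat => n%:R : R)): cT; rewrite !natrD => cT.
move/(congr1 (fun n : nat => n%:R : R)): cS; rewrite !natrD => cS.
move/(congr1 (fun n : nat => n%:R : R)): eT; rewrite !natrD => eT.
move/(congr1 (fun n : nat => n%:R : R)): eS; rewrite !natrD => eS.
have ltR : (#|[set v in T | d u v == 2%N] :&: W|.+1)%:R
           <= (#|[set v in S u | d u v == 2%N] :&: W|)%:R :> R by rewrite ler_nat.
rewrite -natr1 in ltR.
rewrite /cost S'u.
move: ds; rewrite /del_or_swap => -[_ [[v [vS eT']] | [v [w [vS [wS eT']]]]]].
  have c : #|S u| = (#|T| + 1)%N by rewrite (cardsD1 v) vS eT' addnC.
  rewrite c natrD mulrDr mulr1.
  rewrite c natrD in cS.
  lra.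
have c : #|S u| = #|T|.
  by rewrite eT' cardsU1 {1}(cardsD1 v (S u)) vS !inE (negbTE wS) andbF.
rewrite c; rewrite c in cS.
lra.
Qed.

Theorem lemma2p5 (R : realFieldType) (P : finType) (d : P -> P -> nat)
    (alpha : R) :
  one_two_metric d -> 0 < alpha ->
  exists Z0 : R, forall Z : R, Z0 <= Z ->
    forall S : profile P, greedy_equilibrium d Z alpha S -> DSG d S.
Proof.
move=> H apos; exists (alpha + 2) => Z ZZ S [val ge].
have Z1 : 1 + alpha < Z by lra.
have Z2 : 3%:R / 2%:R <= Z by lra.
have [d0 [dsym _]] := H.
have one : forall v w, d v w = 1%N -> w \in S v.
  move=> v w e; apply: contraT => wS.
  have wv : w != v by apply/eqP => ew; move: e; rewrite ew d0.
  have vw : v != w by rewrite eq_sym.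
  have nog : forall p, p \in cands P -> ~~ is_greedy d S w v p.
    move=> p _; apply/negP => g.
    case: (greedy_char H vw g) => [[_ wS']|[x [_ _ _ _ e2]]].
      by rewrite wS' in wS.
    by rewrite e in e2.
  exfalso; apply: (ge v (w |: S v)); last exact: (add_gain H (val v) wS wv nog Z1 Z2).
  rewrite /one_move; split; last by left; exists w.
  by rewrite !inE negb_or eq_sym wv val.
have domS : forall u, dominating d u (S u).
  move=> u w wu wS.
  case: (boolP [exists x, [&& x \in S u, x != u & d x w == 1%N]]).
    by move=> /existsP[x /and3P[xS xu /eqP xw]]; exists x.
  move=> /existsPn nx; exfalso.
  have nog : forall p, p \in cands P -> ~~ is_greedy d S w u p.
    move=> p _; apply/negP => g.
    have uw : u != w by rewrite eq_sym.
    case: (greedy_char H uw g) => [[_ wS']|[x [_ xS xw _ _]]].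
      by rewrite wS' in wS.
    have xu : x != u by apply: contraNneq (val u) => e; rewrite -{1}e.
    by have := nx x; rewrite xS xu xw eqxx.
  apply: (ge u (w |: S u)); last exact: (add_gain H (val u) wS wu nog Z1 Z2).
  rewrite /one_move; split; last by left; exists w.
  by rewrite !inE negb_or eq_sym wu val.
split; first exact: one.
split; first exact: domS.
move=> u N' ds [T1 domT lt].
apply: (ge u N'); last exact: (swap_gain H val one apos Z2 ds T1 domT lt).
move: ds; rewrite /del_or_swap /one_move => -[uN [[v [vS e]]|[v [w [vS [wS e]]]]]].
  by split => //; right; left; exists v.
by split => //; right; right; exists v, w.
Qed.
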